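(* Let $n$ be an odd positive integer, and suppose that $n-1$ queens are placed on $\mathbb{Z}_n^2$ without conflict. Then one more queen can be placed on $\mathbb{Z}_n^2$ so that the resulting $n$ queens are without conflict.
   Context: Queens are placed on distinct fields of the torus board $\mathbb{Z}_n^2$. Two queens at distinct fields $(x,y),(x',y')$ are in conflict iff $x=x'$, or $y=y'$, or $x+y=x'+y'$, or $x-y=x'-y'$ in $\mathbb{Z}_n$. A placement is without conflict if no two queens are in conflict. *)

(* Defs.v *)
(* The torus Z_n^2 is modelled as 'I_n * 'I_n with
   arithmetic taken modulo n (this also covers n = 1, unlike 'Z_n). *)
From mathcomp Require Import all_boot.
Set Implicit Arguments. Unset Strict Implicit. Unset Printing Implicit Defensive.

Definition field (n : nat) := ('I_n * 'I_n)%type.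

(* Two distinct fields (x,y), (x',y') are in conflict iff x = x', or y = y',
   or x + y = x' + y' in Z_n, or x - y = x' - y' in Z_n.
   Since y < n, (x + (n - y)) %% n is the residue of x - y mod n. *)
Definition conflict (n : nat) (p q : field n) : bool :=
  (p != q) &&
  [|| p.1 == q.1, p.2 == q.2,
      (p.1 + p.2) %% n == (q.1 + q.2) %% n
    | (p.1 + (n - p.2)) %% n == (q.1 + (n - q.2)) %% n].

Definition without_conflict (n : nat) (Q : {set field n}) : Prop :=
  forall p q, p \in Q -> q \in Q -> ~~ conflict p q.

(* Main.v *)
Require Import Defs.
From mathcomp Require Import all_boot zify.

Lemma missing n (Q : {set field n}) (f : field n -> nat) :
  odd n -> (forall q, f q < n) -> {in Q &, injective f} -> #|Q| = n.-1 ->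
  exists2 m, m < n & (forall q, q \in Q -> f q != m) /\
     (\sum_(q in Q) f q + m) %% n = 0.
Proof.
move=> On hf inj cQ.
have n0 : 0 < n by rewrite lt0n; apply/eqP => e; rewrite e in On.
pose g q : 'I_n := Ordinal (hf q).
have ginj : {in Q &, injective g}.
  by move=> x y xQ yQ /(congr1 val) /= /inj; apply.
have cA : #|g @: Q| = n.-1 by rewrite card_in_imset.
have : #|~: (g @: Q)| == 1.
  by have := cardsC (g @: Q); rewrite cA card_ord => h; apply/eqP; lia.
case/cards1P=> m hm.
exists (val m); first exact: ltn_ord.
have mA : m \notin g @: Q by rewrite -in_setC hm in_set1.
split.
  move=> q qQ; apply/eqP=> fq; case/negP: mA.
  have -> : m = g q by apply: val_inj.
  exact: imset_f.
have := big_setID (I := 'I_n) (aop := addn) (idx := 0) (A := setT) (g @: Q) (fun i => val i).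
rewrite setTI setTD hm big_set1 big_imset //= => E.
have S : \sum_(i in [set: 'I_n]) (val i) = \sum_(0 <= i < n) i.
  by rewrite big_mkord; apply: eq_bigl => i; rewrite in_setT.
rewrite S bin2_sum bin2odd // in E.
by rewrite -E mulnC modnMl.
Qed.

Lemma conflict_sym n (p q : field n) : conflict p q = conflict q p.
Proof.
by rewrite /conflict (eq_sym p.1) (eq_sym p.2) (eq_sym ((p.1+p.2)%%n))
  (eq_sym ((p.1+(n-p.2))%%n)) (eq_sym p).
Qed.

Lemma mod0D {a b n : nat} : a %% n = 0 -> b %% n = 0 -> (a+b)%%n = 0.
Proof. by move=> ha hb; rewrite -modnDm ha hb mod0n. Qed.

Theorem mainTheorem5 (n : nat) (Q : {set field n}) :
  odd n -> 0 < n -> #|Q| = n.-1 -> without_conflict Q ->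
  exists p : field n, p \notin Q /\ without_conflict (p |: Q).
Proof.
move=> On n0 cQ H.
have injf : forall f : field n -> nat,
    (forall p q, p \in Q -> q \in Q -> p != q -> f p != f q) -> {in Q &, injective f}.
  move=> f hf x y xQ yQ e; apply/eqP; apply: contraT => neq.
  by have := hf x y xQ yQ neq; rewrite e eqxx.
have nc : forall p q, p \in Q -> q \in Q -> p != q ->
   [/\ p.1 != q.1 :> nat, p.2 != q.2 :> nat, (p.1+p.2)%%n != (q.1+q.2)%%n
     & (p.1 + (n - p.2)) %% n != (q.1 + (n - q.2)) %% n].
  move=> p q pQ qQ neq; have := H p q pQ qQ; rewrite /conflict neq /=.
  by rewrite !negb_or => /and4P[a b c d]; split.
have [c c_lt [h1 e1]] := @missing n Q (fun q => q.1) On (fun q => ltn_ord _)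
  (injf _ (fun p q pQ qQ neq => let: And4 x _ _ _ := nc p q pQ qQ neq in x)) cQ.
have [r r_lt [h2 e2]] := @missing n Q (fun q => q.2) On (fun q => ltn_ord _)
  (injf _ (fun p q pQ qQ neq => let: And4 _ x _ _ := nc p q pQ qQ neq in x)) cQ.
have [s s_lt [h3 e3]] := @missing n Q (fun q => (q.1+q.2)%%n) On (fun q => ltn_pmod _ n0)
  (injf _ (fun p q pQ qQ neq => let: And4 _ _ x _ := nc p q pQ qQ neq in x)) cQ.
have [d d_lt [h4 e4]] := @missing n Q (fun q => (q.1+(n-q.2))%%n) On (fun q => ltn_pmod _ n0)
  (injf _ (fun p q pQ qQ neq => let: And4 _ _ _ x := nc p q pQ qQ neq in x)) cQ.
set X := \sum_(q in Q) (q.1 : nat) in e1.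
set Y := \sum_(q in Q) (q.2 : nat) in e2.
set Z := \sum_(q in Q) (n - q.2).
have e3' : (X + Y + s) %% n = 0.
  have t : (\sum_(q in Q) ((q.1 + q.2) %% n)) %% n = (X + Y) %% n by rewrite modn_summ big_split.
  by move: e3; rewrite -modnDml t modnDml.
have e4' : (X + Z + d) %% n = 0.
  have t : (\sum_(q in Q) ((q.1 + (n - q.2)) %% n)) %% n = (X + Z) %% n by rewrite modn_summ big_split.
  by move: e4; rewrite -modnDml t modnDml.
have eZY : (Z + Y) %% n = 0.
  rewrite /Z /Y -big_split /=.
  rewrite (eq_bigr (fun _ => n)); last by move=> q _; rewrite subnK // ltnW.
  by rewrite sum_nat_const modnMl.
have es : s = (c + r) %% n.
  rewrite -(modn_small s_lt); apply/eqP; rewrite -(eqn_modDl (X + Y)).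
  rewrite e3' addnACA; apply/eqP; symmetry; exact: mod0D.
clearbody X Y Z.
have ed : d = (c + (n - r)) %% n.
  rewrite -(modn_small d_lt); apply/eqP; rewrite -(eqn_modDl (X + Z + Y + r)).
  have -> : X + Z + Y + r + d = (X + Z + d) + (Y + r) by clear -r_lt; lia.
  have -> : X + Z + Y + r + (c + (n - r)) = ((X + c) + (Z + Y)) + n by clear -r_lt; lia.
  by rewrite (mod0D e4' e2) (mod0D (mod0D e1 eZY) (modnn n)).
pose p : field n := (Ordinal c_lt, Ordinal r_lt).
have key : forall q, q \in Q -> ~~ conflict p q.
  move=> q qQ; rewrite /conflict negb_and; apply/orP; right.
  rewrite !negb_or; apply/and4P; split.
  - by apply: contra (h1 q qQ) => /eqP <-.
  - by apply: contra (h2 q qQ) => /eqP <-.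
  - by apply: contra (h3 q qQ) => /eqP <-; rewrite es.
  - by apply: contra (h4 q qQ) => /eqP <-; rewrite ed.
exists p; split.
  by apply/negP => pQ; have := h2 p pQ; rewrite eqxx.
move=> x y; rewrite !in_setU1 => /orP[/eqP->|xQ] /orP[/eqP->|yQ].
- by rewrite /conflict eqxx.
- exact: key.
- by rewrite conflict_sym; apply: key.
- exact: H.
Qed.
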